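(* Let $P_1,P_2,N>0$ and let $\rho_1\in[0,1)$ satisfy $\frac{P_2}{N}\ge\frac{\rho_1^2}{1-\rho_1^2}$. Define $R_1(\rho_1)=\frac12\log\big(1+\frac{P_1(1-\rho_1^2)}{N}\big)$ and $$R_2(\rho_1)=\max_{\rho_2\in[0,1]}\min\Big\{\tfrac12\log\Big(1+\tfrac{P_2(1-\rho_2^2)}{N}\Big),\ \tfrac12\log\Big(\tfrac{P_1+P_2+2\sqrt{P_1P_2}\rho_1\rho_2+N}{P_1(1-\rho_1^2)+N}\Big)\Big\}.$$ Then for every $\epsilon>0$, $(R_1(\rho_1),R_2(\rho_1)+\epsilon)\notin\mathcal R_{\mathrm{CL}}(P_1,P_2,N)$.
   Context: Cover–Leung region: $\mathcal R_{\mathrm{CL}}(P_1,P_2,N)=\bigcup_{\rho_1,\rho_2\in[0,1]}\mathcal R_{\mathrm{CL}}^{(\rho_1,\rho_2)}(P_1,P_2,N)$, where $\mathcal R_{\mathrm{CL}}^{(\rho_1,\rho_2)}(P_1,P_2,N)$ is the set of nonnegative $(R_1,R_2)$ with $R_1\le\frac12\log(1+\frac{P_1(1-\rho_1^2)}{N})$, $R_2\le\frac12\log(1+\frac{P_2(1-\rho_2^2)}{N})$, $R_1+R_2\le\frac12\log(1+\frac{P_1+P_2+2\sqrt{P_1P_2}\rho_1\rho_2}{N})$. *)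

(* Defs.v *)
From Stdlib Require Import Reals Lra.
Open Scope R_scope.

(* Logarithm: natural log (the base is irrelevant for the statement). *)
Definition half_log (x : R) : R := / 2 * ln x.

Definition R_CL_rho (P1 P2 N rho1 rho2 R1 R2 : R) : Prop :=
  0 <= R1 /\ 0 <= R2 /\
  R1 <= half_log (1 + P1 * (1 - rho1 ^ 2) / N) /\
  R2 <= half_log (1 + P2 * (1 - rho2 ^ 2) / N) /\
  R1 + R2 <= half_log (1 + (P1 + P2 + 2 * sqrt (P1 * P2) * rho1 * rho2) / N).

Definition R_CL (P1 P2 N R1 R2 : R) : Prop :=
  exists rho1 rho2, 0 <= rho1 <= 1 /\ 0 <= rho2 <= 1 /\
    R_CL_rho P1 P2 N rho1 rho2 R1 R2.

Definition R1_of (P1 N rho1 : R) : R :=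
  half_log (1 + P1 * (1 - rho1 ^ 2) / N).

Definition R2_obj (P1 P2 N rho1 rho2 : R) : R :=
  Rmin (half_log (1 + P2 * (1 - rho2 ^ 2) / N))
       (half_log ((P1 + P2 + 2 * sqrt (P1 * P2) * rho1 * rho2 + N)
                  / (P1 * (1 - rho1 ^ 2) + N))).

Definition is_max_on_01 (f : R -> R) (m : R) : Prop :=
  (exists x, 0 <= x <= 1 /\ f x = m) /\ (forall x, 0 <= x <= 1 -> f x <= m).

(* Main.v *)
Require Import Defs.
From Stdlib Require Import Reals Lra Psatz.
Open Scope R_scope.

Lemma Rdiv_le_0_compat a b : 0 <= a -> 0 < b -> 0 <= a / b.
Proof. intros. unfold Rdiv. apply Rmult_le_pos; [lra|left; apply Rinv_0_lt_compat; lra]. Qed.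

Lemma hl_le a b : 0 < a -> a <= b -> half_log a <= half_log b.
Proof.
  intros Ha Hab. unfold half_log. apply Rmult_le_compat_l; [lra|].
  destruct (Req_dec a b) as [->|Hn]; [lra|]. left; apply ln_increasing; lra.
Qed.

Lemma hl_lt a b : 0 < a -> a < b -> half_log a < half_log b.
Proof.
  intros Ha Hab. unfold half_log. apply Rmult_lt_compat_l; [lra|].
  apply ln_increasing; lra.
Qed.

Theorem mainTheorem12 (P1 P2 N rho1 R2 : R) :
  0 < P1 -> 0 < P2 -> 0 < N ->
  0 <= rho1 < 1 ->
  P2 / N >= rho1 ^ 2 / (1 - rho1 ^ 2) ->
  is_max_on_01 (R2_obj P1 P2 N rho1) R2 ->
  forall eps : R, 0 < eps ->
  ~ R_CL P1 P2 N (R1_of P1 N rho1) (R2 + eps).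
Proof.
  intros HP1 HP2 HN Hrho _ [_ Hub] eps Heps
    [r1 [r2 [Hr1 [Hr2 [_ [_ [Ha [Hb Hc]]]]]]]].
  specialize (Hub r2 Hr2). unfold R2_obj in Hub. unfold R1_of in *.
  assert (Hr1le : r1 <= rho1).
  { destruct (Rle_dec r1 rho1) as [h|h]; [exact h|]. exfalso. apply Rnot_le_lt in h.
    assert (half_log (1 + P1 * (1 - r1 ^ 2) / N) <
            half_log (1 + P1 * (1 - rho1 ^ 2) / N)); [|lra].
    apply hl_lt.
    - assert (0 <= P1 * (1 - r1 ^ 2) / N); [|lra].
      apply Rdiv_le_0_compat; [|lra]. apply Rmult_le_pos; nra.
    - assert (P1 * (1 - r1 ^ 2) / N < P1 * (1 - rho1 ^ 2) / N); [|lra].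
      unfold Rdiv. apply Rmult_lt_compat_r; [apply Rinv_0_lt_compat; lra|].
      apply Rmult_lt_compat_l; nra. }
  set (s := sqrt (P1 * P2)).
  assert (Hs : 0 <= s) by apply sqrt_pos.
  set (B := P1 * (1 - rho1 ^ 2)).
  set (A := P1 + P2 + 2 * s * rho1 * r2).
  assert (HB : 0 <= B) by (unfold B; apply Rmult_le_pos; [lra|simpl; nra]).
  assert (HA : 0 <= A) by (unfold A; assert (0 <= s * rho1 * r2) by (apply Rmult_le_pos; [apply Rmult_le_pos|]; lra); lra).
  assert (Hmono : half_log (1 + (P1 + P2 + 2 * s * r1 * r2) / N) <= half_log (1 + A / N)).
  { apply hl_le.
    - assert (0 <= (P1 + P2 + 2 * s * r1 * r2) / N); [|lra].
      apply Rdiv_le_0_compat; [|lra].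
      assert (0 <= s * r1 * r2) by (apply Rmult_le_pos; [apply Rmult_le_pos|]; lra); lra.
    - assert ((P1 + P2 + 2 * s * r1 * r2) / N <= A / N); [|lra].
      unfold Rdiv. apply Rmult_le_compat_r; [left; apply Rinv_0_lt_compat; lra|].
      unfold A. assert (s * r1 * r2 <= s * rho1 * r2); [|lra].
      apply Rmult_le_compat_r; [lra|]. apply Rmult_le_compat_l; lra. }
  assert (Hq : half_log ((A + N) / (B + N)) = half_log (1 + A / N) - half_log (1 + B / N)).
  { unfold half_log. rewrite <- Rmult_minus_distr_l. f_equal.
    replace ((A + N) / (B + N)) with ((1 + A / N) / (1 + B / N)) by (field; lra).
    assert (0 <= A / N) by (apply Rdiv_le_0_compat; lra).
    assert (0 <= B / N) by (apply Rdiv_le_0_compat; lra).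
    unfold Rdiv at 1. rewrite ln_mult; [|lra|apply Rinv_0_lt_compat; lra].
    rewrite ln_Rinv; lra. }
  assert (H2 : R2 + eps <= Rmin (half_log (1 + P2 * (1 - r2 ^ 2) / N))
                               (half_log ((A + N) / (B + N)))).
  { apply Rmin_glb; [exact Hb|]. rewrite Hq. fold s in Hc. fold B in Hc. lra. }
  unfold A, B, s in H2. lra.
Qed.
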